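(* Let $p$ be a prime, $n\ge1$, $d\ge2$, and ${\bf a}_1,\dots,{\bf a}_N\in\mathbb{N}^{n+1}$ with coordinate sums $d$. If $u,v\in U_{\min}$, $\nu\in\mathbb{N}^N$, and $\sum_{j=1}^N\nu_j{\bf a}_j^+=pu-v$, then $\nu_j\le p-1$ for all $j$. In particular, $A_{uv}(\Lambda)\in(\mathbb{Q}\cap\mathbb{Z}_p)[\Lambda]$, so $A_{uv}(\Lambda)$ can be reduced modulo $p$.
   Context: ${\bf a}_j^+=({\bf a}_j,1)\in\mathbb{N}^{n+2}$. $\mu\ge0$ is defined by $\lceil(n+1)/d\rceil=\mu+1$. $U_{\min}$ is the set of $u=(u_0,\dots,u_{n+1})\in\mathbb{N}^{n+2}$ with $\sum_{i=0}^nu_i=du_{n+1}$, $u_i>0$ for all $i$, and $u_{n+1}=\mu+1$. For $u,v\in U_{\min}$, $$A_{uv}(\Lambda)=(-1)^{\mu+1}\sum_{\nu\in\mathbb{N}^N,\ \sum_j\nu_j{\bf a}_j^+=pu-v}\frac{\Lambda_1^{\nu_1}\cdots\Lambda_N^{\nu_N}}{\nu_1!\cdots\nu_N!}\in\mathbb{Q}[\Lambda_1,\dots,\Lambda_N].$$ *)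

(* Defs.v *)
From mathcomp Require Import all_boot all_order all_algebra.
From mathcomp Require Import mpoly.
Set Implicit Arguments. Unset Strict Implicit. Unset Printing Implicit Defensive.
Import GRing.Theory Num.Theory.
Local Open Scope ring_scope.

(* Exponent vectors a_1..a_N in N^{n+1} are  a : {ffun 'I_N -> {ffun 'I_n.+1 -> nat}};
   vectors u in N^{n+2} are  u : {ffun 'I_n.+2 -> nat}, coordinate i <-> index i,
   the last coordinate u_{n+1} being  u ord_max. *)

(* mu >= 0 with ceil((n+1)/d) = mu + 1, where ceil((n+1)/d) = (n+d) %/ d for d > 0. *)
Definition mu (n d : nat) : nat := ((n + d) %/ d).-1.

(* a_j^+ = (a_j, 1) in N^{n+2} *)
Definition aplus (n N : nat) (a : {ffun 'I_N -> {ffun 'I_n.+1 -> nat}}) (j : 'I_N)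
  (i : 'I_n.+2) : nat :=
  match unlift ord_max i with Some k => a j k | None => 1%N end.

Definition in_Umin (n d : nat) (u : {ffun 'I_n.+2 -> nat}) : bool :=
  [&& (\sum_(i < n.+2 | i != ord_max) u i == d * u ord_max)%N,
      [forall i, (0 < u i)%N] & u ord_max == (mu n d).+1].

Definition sol_cond (n N p : nat) (a : {ffun 'I_N -> {ffun 'I_n.+1 -> nat}})
  (u v : {ffun 'I_n.+2 -> nat}) (nu : 'I_N -> nat) : bool :=
  [forall i : 'I_n.+2,
    ((\sum_(j < N) nu j * aplus a j i)%N)%:Z == (p * u i)%N%:Z - (v i)%:Z].

(* Every solution nu satisfies
   nu_j <= sum_j nu_j = p u_{n+1} - v_{n+1} <= p u_{n+1} (last coordinate),
   so summing over nu with entries in [0, p u_{n+1}] enumerates all solutions. *)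
Definition A_uv (n N d p : nat) (a : {ffun 'I_N -> {ffun 'I_n.+1 -> nat}})
  (u v : {ffun 'I_n.+2 -> nat}) : {mpoly rat[N]} :=
  \sum_(nu : {ffun 'I_N -> 'I_(p * u ord_max).+1}
         | sol_cond p a u v (fun j => nat_of_ord (nu j)))
     (((-1) ^+ (mu n d).+1 / (\prod_(j < N) ((nu j) `!)%:R)) : rat)
       *: 'X_[[multinom (nat_of_ord (nu j)) | j < N]].

(* Main.v *)
Require Import Defs.
From mathcomp Require Import all_boot all_order all_algebra.
From mathcomp Require Import mpoly.
From mathcomp Require Import zify.
Import Order.TTheory GRing.Theory Num.Theory.
Local Open Scope ring_scope.

Lemma fact_ndvd (p k : nat) : prime p -> (k < p)%N -> ~~ (p %| k`!)%N.
Proof.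
move=> pp; elim: k => [|k IH] hk; first by rewrite fact0 Euclid_dvd1.
rewrite factS Euclid_dvdM // negb_or IH ?andbT; last by apply: ltnW.
apply/negP=> /dvdn_leq => /(_ isT); rewrite leqNgt hk //.
Qed.

Lemma part1 (p n d N : nat) (a : {ffun 'I_N -> {ffun 'I_n.+1 -> nat}})
  (hp : prime p) (hd : (2 <= d)%N)
  (ha : forall j : 'I_N, (\sum_(i < n.+1) a j i)%N = d)
  (u v : {ffun 'I_n.+2 -> nat}) (hu : in_Umin d u) (hv : in_Umin d v) :
  (forall nu : 'I_N -> nat, sol_cond p a u v nu -> forall j : 'I_N, (nu j <= p - 1)%N).
Proof.
move=> nu /forallP hs j.
case/and3P: hu => /eqP hsu /forallP hpu /eqP hmu.
case/and3P: hv => _ /forallP hpv _.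
rewrite leqNgt; apply/negP => hj.
have hp0 := prime_gt0 hp.
have key : forall i : 'I_n.+1, (a j i < u (lift ord_max i))%N.
  move=> i; have := hs (lift ord_max i); rewrite /aplus.
  set S := (\sum_(j0 < N) _)%N => /eqP hS.
  have hS' : (S + v (lift ord_max i) = p * u (lift ord_max i))%N.
    have hle : (v (lift ord_max i) <= p * u (lift ord_max i))%N.
      rewrite -lez_nat; apply/(@le_trans _ _ (S%:Z + (v (lift ord_max i))%:Z)).
        by rewrite lerDr.
      by rewrite hS subrK.
    by apply/eqP; rewrite -eqz_nat PoszD hS subrK.
  have hjS : (nu j * a j i <= S)%N.
    rewrite /S (bigD1 j) //= liftK; exact: leq_addr.
  have h1 := hpv (lift ord_max i).
  have : (p * a j i < p * u (lift ord_max i))%N.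
    have : (p * a j i <= nu j * a j i)%N by rewrite leq_mul2r; apply/orP; right; lia.
    lia.
  by rewrite ltn_mul2l => /andP[].
have hsum : (d + n.+1 <= d * u ord_max)%N.
  rewrite -hsu big_mkcond big_ord_recr /= eqxx addn0 -(ha j).
  have -> : (\sum_(i < n.+1) a j i + n.+1 = \sum_(i < n.+1) a j i + \sum_(i < n.+1) 1)%N.
    by rewrite sum1_card card_ord.
  rewrite -big_split /=; apply: leq_sum => i _.
  have -> : widen_ord (leqnSn n.+1) i = lift ord_max i.
    by apply: val_inj; rewrite /= /bump leqNgt ltn_ord.
  rewrite eq_sym neq_lift addn1; exact: key.
rewrite hmu /mu in hsum.
have := leq_divM (n + d) d.
move: hsum; set q := ((n + d) %/ d)%N => hsum hq.
have q0 : (0 < q)%N by rewrite /q divn_gt0; lia.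
rewrite prednK // in hsum. nia.
Qed.

Theorem lemma1p3 (p n d N : nat) (a : {ffun 'I_N -> {ffun 'I_n.+1 -> nat}})
  (hp : prime p) (hn : (1 <= n)%N) (hd : (2 <= d)%N)
  (ha : forall j : 'I_N, (\sum_(i < n.+1) a j i)%N = d)
  (u v : {ffun 'I_n.+2 -> nat}) (hu : in_Umin d u) (hv : in_Umin d v) :
  (forall nu : 'I_N -> nat, sol_cond p a u v nu -> forall j : 'I_N, (nu j <= p - 1)%N)
  /\ (forall m : 'X_{1..N}, ~~ (p %| absz (denq ((A_uv d p a u v)@_m)))%N).
Proof.
have P1 := @part1 p n d N a hp hd ha u v hu hv.
split => // m.
rewrite /A_uv raddf_sum /=.
under eq_bigr => nu _ do rewrite mcoeffZ mcoeffX.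
set mono := fun nu : {ffun 'I_N -> 'I_(p * u ord_max).+1} =>
   [multinom (nat_of_ord (nu j)) | j < N].
have mono_inj : injective mono.
  move=> x y /(congr1 (fun m : 'X_{1..N} => m)) h; apply/ffunP => j.
  apply: val_inj; have := congr1 (fun m : 'X_{1..N} => m j) h.
  by rewrite /mono !mnmE.
case: (pickP (fun nu : {ffun 'I_N -> 'I_(p * u ord_max).+1} => sol_cond p a u v (fun j => nat_of_ord (nu j)) && (mono nu == m))).
  move=> nu0 H0; have hs0 : sol_cond p a u v (fun j => nat_of_ord (nu0 j)) by case: (sol_cond _ _ _ _ _) H0.
  have hm0 : mono nu0 = m by apply/eqP; case: (mono nu0 == m) H0; rewrite ?andbF.
  rewrite (bigD1 nu0) //= [X in _ + X]big1 ?addr0; last first.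
    move=> nu /andP[_ hne]; rewrite -hm0.
    case: eqP => [/mono_inj E|]; last by rewrite mulr0.
    by rewrite E eqxx in hne.
  rewrite -/(mono nu0) hm0 eqxx mulr1.
  rewrite -signr_odd denq_mulr_sign -natr_prod.
  have -> : ((\prod_(j < N) (nu0 j)`!)%:R : rat) = ((\prod_(j < N) (nu0 j)`!)%N%:Z)%:~R by [].
  rewrite denqVz; last first.
    rewrite eqz_nat -lt0n; apply/prodn_gt0 => j; exact: fact_gt0.
  rewrite ger0_norm //=.
  rewrite Euclid_dvd_prod // big1 // => j _; apply/negbTE/fact_ndvd => //.
  have := P1 _ hs0 j; have := prime_gt0 hp; simpl; lia.
move=> hno; rewrite big1 ?absz1 ?Euclid_dvd1 //.
move=> nu hs; have := hno nu; rewrite hs /= => /negbT ne.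
by rewrite -/(mono nu) (negbTE ne) mulr0.
Qed.
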